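(* Let $X$ be a split geometric complex whose unique $J$-invariant cell $\eta$ has Maslov grading $g$, let $\Delta$ be a non-negative integer with $2\Delta\le\mathrm{width}(X)$, and let $X^d(\Delta)$ be the double of $X$ with parameter $\Delta$ (for any choice of splitting). Then, as graded $\mathbb{F}[U]$-modules, \[ H_*(X^d(\Delta))\cong H_*(X)\oplus\mathcal{T}_g(\Delta), \] where $\mathcal{T}_g(\Delta)=\mathbb{F}[U]/U^\Delta$ graded so that its top element has grading $g$ (zero if $\Delta=0$).
   Context: $\mathbb{F}=\mathbb{Z}/2$, $\deg U=-2$. Homology means homology of the associated $\mathbb{F}[U]$-complexes. Geometric complex: a finite-dimensional chain complex $C_{cell}$ over $\mathbb{F}$ with a distinguished basis of ''cells'', each cell $e$ having an integer dimension $\dim e$ with the differential lowering dimension by one, together with $\mathrm{gr}$ from cells to a coset of $2\mathbb{Z}$ in $\mathbb{Q}$ with $\mathrm{gr}(e')\ge\mathrm{gr}(e)$ whenever $e'$ appears in $\partial e$. Associated $\mathbb{F}[U]$-complex: $C_{cell}\otimes\mathbb{F}[U]$, Maslov grading $M(e)=\mathrm{gr}(e)+\dim e$, $\partial e=\sum_{e'\in\partial e}U^{(\mathrm{gr}(e')-\mathrm{gr}(e))/2}e'$. Width of $e$: $\min\{\mathrm{gr}(e')-\mathrm{gr}(e):e'\in\partial e\}$ ($\infty$ if $\partial e=0$); $\mathrm{width}(X)$ is the minimum over cells. Split: an involution $J$ of $C_{cell}$ permuting cells, commuting with $\partial$, preserving $\dim$ and $\mathrm{gr}$, with exactly one fixed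 cell $\eta$. Doubling: choose a splitting, the span $C$ of one cell from each $J$-orbit of size two, so $C_{cell}=C\oplus JC\oplus\mathbb{F}\eta$. Each $x\in C$ has $\partial x=a+(1+J)b$ or $a+(1+J)b+\eta$ uniquely with $a,b\in C$; $\partial\eta=(1+J)\zeta$, $\zeta\in C$. The skeleton of $X^d(\Delta)$ is $C\oplus\mathbb{F}\omega\oplus JC\oplus\mathbb{F}J\omega\oplus\mathbb{F}\theta$, $J$ swapping $\omega,J\omega$ and fixing $\theta$. Differential: for $x\in C$, $\partial^dx=a+(1+J)b$ if $\partial x=a+(1+J)b$ and $\eta\notin\partial b$; $=a+(1+J)b+\theta$ if $\partial x=a+(1+J)b$ and $\eta\in\partial b$; $=a+(1+J)b+\omega$ if $\partial x=a+(1+J)b+\eta$; $\partial^d\omega=(1+J)\zeta$; $\partial^d\theta=(1+J)\omega$; extended $J$-equivariantly. Cells of $C,JC$ keep $\dim,\mathrm{gr}$; $\omega,J\omega$ have $\dim\eta$ and $\mathrm{gr}(\eta)$; $\theta$ has $\dim\eta+1$ and $\mathrm{gr}(\eta)-2\Delta$. *)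

(* Defs.v *)
From HB Require Import structures.
From mathcomp Require Import all_boot all_order all_algebra.
Set Implicit Arguments. Unset Strict Implicit. Unset Printing Implicit Defensive.
Import Order.TTheory GRing.Theory Num.Theory.
Local Open Scope ring_scope.

(* A cell complex over F = Z/2 with distinguished basis of cells:      *)
(* [bd e e'] means that e' appears (with coefficient 1) in del e.      *)
Record geom_cx := GeomCx {
  cell : finType;
  cdim : cell -> int;
  cgr  : cell -> rat;
  bd   : cell -> cell -> bool }.

Definition is_geom (X : geom_cx) : Prop :=
  [/\ (forall e e' : cell X, bd e e' -> cdim e' = cdim e - 1),
      (* del o del = 0 over Z/2 *)
      (forall e e'' : cell X, ~~ odd #|[set e' | bd e e' && bd e' e'']|),
      (exists q0 : rat, forall e : cell X, exists z : int, cgr e = q0 + 2 * z%:~R) &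
      (forall e e' : cell X, bd e e' -> cgr e <= cgr e')].

Definition maslov (X : geom_cx) (e : cell X) : rat := cgr e + (cdim e)%:~R.

(* [w <= width X]: width X is the minimum over cells e of
   min {gr e' - gr e : e' in del e} (infinity if del e = 0); so w <= width X
   iff w <= gr e' - gr e for every e and every e' appearing in del e. *)
Definition le_width (w : rat) (X : geom_cx) : Prop :=
  forall e e' : cell X, bd e e' -> w <= cgr e' - cgr e.

Definition is_split (X : geom_cx) (J : cell X -> cell X) (eta : cell X) : Prop :=
  [/\ (forall e, J (J e) = e),
      (forall e e', bd (J e) (J e') = bd e e'),
      (forall e, cdim (J e) = cdim e),
      (forall e, cgr (J e) = cgr e) &
      (forall e, (J e == e) = (e == eta))].

(* A splitting: inC is the set of chosen cells, exactly one from each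
   J-orbit of size two (the orbits of size two are {e, J e}, e <> eta). *)
Definition is_splitting (X : geom_cx) (J : cell X -> cell X) (eta : cell X)
    (inC : pred (cell X)) : Prop :=
  (forall e, inC e -> e != eta) /\
  (forall e, e != eta -> inC (J e) = ~~ inC e).

(* Cells: the cells of X other than eta (= C + JC), plus omega         *)
(* (inr (inl false)), J omega (inr (inl true)) and theta (inr (inr tt)).*)
Section Double.
Variables (X : geom_cx) (J : cell X -> cell X) (eta : cell X)
          (inC : pred (cell X)) (Delta : nat).

Definition dcell : finType := ({c : cell X | c != eta} + (bool + unit))%type.

Definition rcell := (cell X + (bool + unit))%type.
Definition raw (t : dcell) : rcell :=
  match t with inl y => inl (val y) | inr o => inr o end.
Definition rJ (t : rcell) : rcell :=
  match t with
  | inl y => inl (J y)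
  | inr (inl b) => inr (inl (~~ b))
  | inr (inr u) => inr (inr u)
  end.

(* For x in C: del x = a + (1+J) b (+ eta), a, b in C.  The coefficient
   of y in C in del x is a_y + b_y, that of J y is b_y. *)
Definition db (x : cell X) : pred (cell X) := fun y => inC y && bd x (J y).
Definition da (x : cell X) : pred (cell X) :=
  fun y => inC y && (bd x y (+) bd x (J y)).
(* coefficient of eta in del b *)
Definition eta_in_db (x : cell X) : bool := odd #|[set y | db x y && bd y eta]|.
(* coefficient of the old cell y (y <> eta) in a + (1+J) b *)
Definition ab_coef (x y : cell X) : bool :=
  if inC y then da x y (+) db x y else db x (J y).

(* del^d x for x in C, as coefficient function on raw cells *)
Definition dbdC (x : cell X) (t : rcell) : bool :=
  match t with
  | inl y => ab_coef x y
  | inr (inl false) => bd x eta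
  | inr (inl true) => false
  | inr (inr _) => ~~ bd x eta && eta_in_db x
  end.

(* del eta = (1+J) zeta, zeta in C *)
Definition zeta : pred (cell X) := fun y => inC y && bd eta y.
(* del^d omega = (1+J) zeta *)
Definition dbdOm (t : rcell) : bool :=
  match t with
  | inl y => if inC y then zeta y else zeta (J y)
  | inr _ => false
  end.
Definition dbdTh (t : rcell) : bool :=
  match t with inr (inl _) => true | _ => false end.

(* extended J-equivariantly: coef of t in del^d(J s) = coef of J t in del^d s *)
Definition dbd (s t : dcell) : bool :=
  match s with
  | inl x => if inC (val x) then dbdC (val x) (raw t)
             else dbdC (J (val x)) (rJ (raw t))
  | inr (inl false) => dbdOm (raw t)
  | inr (inl true) => dbdOm (rJ (raw t))
  | inr (inr _) => dbdTh (raw t)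
  end.

Definition ddim (s : dcell) : int :=
  match s with
  | inl x => cdim (val x)
  | inr (inl _) => cdim eta
  | inr (inr _) => cdim eta + 1
  end.

Definition dgr (s : dcell) : rat :=
  match s with
  | inl x => cgr (val x)
  | inr (inl _) => cgr eta
  | inr (inr _) => cgr eta - 2 * Delta%:R
  end.

Definition dbl_cx : geom_cx := @GeomCx dcell ddim dgr dbd.

End Double.

(* Graded F[U]-modules (deg U = -2, gradings in Q), presented in each  *)
(* grading m as a subquotient Z_m / B_m of F^(amb m) (row spaces),     *)
(* with U : F^(amb m) -> F^(amb (m-2)) inducing the U-action.          *)
Notation F := 'F_2.

Record gmod := GMod {
  amb : rat -> nat;
  gZ  : forall m, 'M[F]_(amb m);
  gB  : forall m, 'M[F]_(amb m);
  gU  : forall m, 'M[F]_(amb m, amb (m - 2)) }.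

(* Isomorphism of graded F[U]-modules between the subquotients:
   a family of linear maps f_m inducing, in every grading m, a well-defined
   bijection Z_m/B_m -> Z'_m/B'_m which commutes with U. *)
Definition gmod_iso (M N : gmod) : Prop :=
  exists f : forall m, 'M[F]_(amb M m, amb N m),
  forall m,
  [/\ (gZ M m *m f m <= gZ N m)%MS,
      (gB M m *m f m <= gB N m)%MS,
      (forall v : 'rV[F]_(amb M m),
          (v <= gZ M m)%MS -> (v *m f m <= gB N m)%MS -> (v <= gB M m)%MS),
      (gZ N m <= gZ M m *m f m + gB N m)%MS &
      (forall v : 'rV[F]_(amb M m), (v <= gZ M m)%MS ->
          (v *m gU M m *m f (m - 2) - v *m f m *m gU N m <= gB N (m - 2))%MS)].

Definition gsum (M N : gmod) : gmod :=
  @GMod (fun m => amb M m + amb N m)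
    (fun m => block_mx (gZ M m) 0 0 (gZ N m))
    (fun m => block_mx (gB M m) 0 0 (gB N m))
    (fun m => block_mx (gU M m) 0 0 (gU N m)).

(* T_g(Delta) = F[U]/U^Delta, top element 1 in grading g: it has one
   generator U^k in grading g - 2k for k < Delta, and U maps U^k to U^(k+1)
   (U^Delta = 0). Zero module if Delta = 0. *)
Definition Tmod (g : rat) (Delta : nat) : gmod :=
  @GMod (fun m => nat_of_bool [exists k : 'I_Delta, m == g - 2 * k%:R])
    (fun m => 1%:M) (fun m => 0) (fun m => const_mx 1).

(* Homology of the associated F[U]-complex C_cell (x) F[U].            *)
(* In Maslov grading m the complex has F-basis the U^k e with k >= 0,  *)
(* M(e) - 2k = m; we identify U^((M e - m)/2) e with the coordinate    *)
(* vector of the cell e in F^cells.  Under this identification         *)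
(*  del (U^k e) = sum_{e' in del e} U^(k + (gr e' - gr e)/2) e'        *)
(* is the cell boundary matrix D, and U is the identity on coordinates. *)
Section Homology.
Variable X : geom_cx.

Definition cbasis (m : rat) (e : cell X) : bool :=
  ((maslov e - m) / 2) \is a Num.nat.

(* projector onto the grading-m chain group C_m *)
Definition Cm (m : rat) : 'M[F]_#|cell X| :=
  diag_mx (\row_i (cbasis m (enum_val i))%:R).

(* boundary matrix acting on row vectors *)
Definition Dmx : 'M[F]_#|cell X| :=
  \matrix_(i, j) (bd (enum_val i) (enum_val j))%:R.

Definition HF : gmod :=
  @GMod (fun _ => #|cell X|)
    (fun m => (Cm m :&: kermx Dmx)%MS)
    (fun m => Cm (m + 1) *m Dmx)
    (fun m => 1%:M).
End Homology.

(* Main.v *)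
Require Import Defs.
From HB Require Import structures.
From mathcomp Require Import all_boot all_order all_algebra.
From mathcomp Require Import zify ring lra.
Import Order.TTheory GRing.Theory Num.Theory.
Local Open Scope ring_scope.
Set Implicit Arguments. Unset Strict Implicit. Unset Printing Implicit Defensive.

Lemma F2_11 : (1 + 1 : F) = 0.
Proof. by apply/eqP. Qed.

Lemma b2F_add (a b : bool) : (a%:R + b%:R : F) = (a (+) b)%:R.
Proof. by case: a; case: b; rewrite ?add0r ?addr0 ?F2_11. Qed.

Lemma b2F_mul (a b : bool) : (a%:R * b%:R : F) = (a && b)%:R.
Proof. by case: a; case: b; rewrite ?mul0r ?mulr0 ?mul1r. Qed.

Lemma natF (n : nat) : (n%:R : F) = (odd n)%:R.
Proof. by rewrite -(@Fp_nat_mod 2) // modn2. Qed.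

Lemma sum1F (T : finType) (P : pred T) :
  (\sum_(x | P x) (1 : F)) = (odd #|P|)%:R.
Proof. by rewrite sumr_const -[_ *+ _]/((#|P|)%:R) natF. Qed.

Lemma sum_b2F (T : finType) (P : pred T) :
  (\sum_x (P x)%:R : F) = (odd #|P|)%:R.
Proof. by rewrite -sum1F [RHS]big_mkcond /=; apply: eq_bigr => x _; case: (P x). Qed.

Definition mxf (T T' : finType) (f : T -> T' -> F) : 'M[F]_(#|T|, #|T'|) :=
  \matrix_(i, j) f (enum_val i) (enum_val j).

Lemma mxfE (T T' : finType) (f : T -> T' -> F) i j :
  mxf f i j = f (enum_val i) (enum_val j).
Proof. by rewrite mxE. Qed.

Lemma sum_ord_enum (T : finType) (G : T -> F) :
  \sum_(j < #|T|) G (enum_val j) = \sum_x G x.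
Proof.
rewrite (reindex (@enum_rank T)); last by apply: onW_bij; apply: enum_rank_bij.
by apply: eq_bigr => x _; rewrite enum_rankK.
Qed.

Lemma mulmxf (T1 T2 T3 : finType) (f : T1 -> T2 -> F) (h : T2 -> T3 -> F) :
  mxf f *m mxf h = mxf (fun x z => \sum_y f x y * h y z).
Proof.
apply/matrixP => i k; rewrite !mxE.
rewrite -(sum_ord_enum (fun y => f (enum_val i) y * h y (enum_val k))).
by apply: eq_bigr => j _; rewrite !mxE.
Qed.

Lemma mxf_eq (T T' : finType) (f h : T -> T' -> F) :
  (forall x y, f x y = h x y) -> mxf f = mxf h.
Proof. by move=> E; apply/matrixP => i j; rewrite !mxE E. Qed.

Lemma mxf1 (T : finType) : (1%:M : 'M[F]_#|T|) = mxf (fun x y => (x == y)%:R).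
Proof. by apply/matrixP => i j; rewrite !mxE (inj_eq enum_val_inj). Qed.

Lemma sum_indic (T : finType) (a : T) (G : T -> F) :
  \sum_y G y * (y == a)%:R = G a.
Proof.
rewrite (bigD1 a) //= eqxx mulr1 big1 ?addr0 // => y /negbTE ->; by rewrite mulr0.
Qed.

Lemma sum_indicl (T : finType) (a : T) (G : T -> F) :
  \sum_y (a == y)%:R * G y = G a.
Proof.
rewrite (bigD1 a) //= eqxx mul1r big1 ?addr0 // => y; rewrite eq_sym => /negbTE ->; by rewrite mul0r.
Qed.

Lemma sum_indic_opt (T : finType) (o : option T) (G : T -> F) :
  \sum_y (o == Some y)%:R * G y = if o is Some a then G a else 0.
Proof.
case: o => [a|]; last by rewrite big1 // => y _; rewrite mul0r.
by rewrite -(sum_indicl a); apply: eq_bigr => y _.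
Qed.

Lemma sum_sig (T : finType) (P : pred T) (H : T -> F) :
  \sum_(y : {x | P x}) H (val y) = \sum_(x | P x) H x.
Proof.
symmetry.
rewrite (reindex_omap (val : {x | P x} -> T) insub); last first.
  by move=> i Pi; rewrite insubT.
by apply: eq_bigl=> -[i iA]/=; rewrite insubT ?iA /= eqxx.
Qed.

Section GenMx.
Lemma row_block_sub m n1 n2 p1 p2 (x : 'M[F]_(m, n1)) (y : 'M[F]_(m, n2))
   (A : 'M[F]_(p1, n1)) (B : 'M[F]_(p2, n2)) :
  (x <= A)%MS -> (y <= B)%MS -> (row_mx x y <= block_mx A 0 0 B)%MS.
Proof.
move=> /submxP[W1 ->] /submxP[W2 ->].
apply/submxP; exists (row_mx W1 W2).
by rewrite mul_row_block !mulmx0 addr0 add0r.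
Qed.

Lemma row_block_sub0 m n1 n2 p1 p2 (x : 'M[F]_(m, n1)) (y : 'M[F]_(m, n2))
   (A : 'M[F]_(p1, n1)) :
  (row_mx x y <= block_mx A 0 0 (0 : 'M[F]_(p2, n2)))%MS -> (x <= A)%MS /\ y = 0.
Proof.
move=> /submxP[W]; rewrite -[W]hsubmxK mul_row_block !mulmx0 addr0 add0r.
by move/eq_row_mx => [-> ->]; split => //; apply: submxMl.
Qed.
End GenMx.

Lemma mulmxfE_l (T1 T2 : finType) n (f : T1 -> T2 -> F) (B : 'M[F]_(#|T2|, n)) i j :
  (mxf f *m B) i j = \sum_y f (enum_val i) y * B (enum_rank y) j.
Proof.
rewrite !mxE -(sum_ord_enum (fun y => f (enum_val i) y * B (enum_rank y) j)).
by apply: eq_bigr => k _; rewrite mxfE enum_valK.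
Qed.

Lemma mulmxfE_r (T2 T3 : finType) n (A : 'M[F]_(n, #|T2|)) (h : T2 -> T3 -> F) i j :
  (A *m mxf h) i j = \sum_y A i (enum_rank y) * h y (enum_val j).
Proof.
rewrite !mxE -(sum_ord_enum (fun y => A i (enum_rank y) * h y (enum_val j))).
by apply: eq_bigr => k _; rewrite mxfE enum_valK.
Qed.

Lemma sum_diag_l (T : finType) (p : pred T) (x : T) (G : T -> F) :
  \sum_y ((x == y) && p x)%:R * G y = (p x)%:R * G x.
Proof.
rewrite -(sum_indicl x (fun y => (p x)%:R * G y)); apply: eq_bigr => y _.
by rewrite mulrA b2F_mul andbC.
Qed.

Lemma sum_diag_r (T : finType) (p : pred T) (z : T) (G : T -> F) :
  \sum_y G y * ((y == z) && p y)%:R = G z * (p z)%:R.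
Proof.
rewrite -(sum_indic z (fun y => G y * (p y)%:R)); apply: eq_bigr => y _.
by rewrite -mulrA b2F_mul andbC.
Qed.

Lemma thin_sub0 p q n (M : 'M[F]_(p, n)) : n = 0%N -> (M <= (0 : 'M[F]_(q, n)))%MS.
Proof. by move=> hn; subst n; rewrite thinmx0 sub0mx. Qed.

Lemma flat_sub p q n (M : 'M[F]_(p, n)) (B : 'M[F]_(q, n)) : p = 0%N -> (M <= B)%MS.
Proof. by move=> hp; subst p; rewrite flatmx0 sub0mx. Qed.

Lemma one_const a : (a <= 1)%N ->
  (1%:M : 'M[F]_a) = (const_mx 1 : 'M[F]_(a, 1)) *m (const_mx 1 : 'M[F]_(1, a)).
Proof.
move=> ha; apply/matrixP => i j; rewrite !mxE big_ord1 !mxE mulr1.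
suff -> : i == j by [].
apply/eqP; case: i j => [x hx] [y hy]; apply/val_inj => /=; lia.
Qed.

Lemma sum_ord_rank (T : finType) (G : 'I_#|T| -> F) :
  \sum_(k < #|T|) G k = \sum_x G (enum_rank x).
Proof.
rewrite -(sum_ord_enum (fun x => G (enum_rank x))).
by apply: eq_bigr => k _; rewrite enum_valK.
Qed.

Section Main.
Variables (X : geom_cx) (J : cell X -> cell X) (eta : cell X)
    (inC : pred (cell X)) (Delta : nat).
Hypotheses (HG : is_geom X) (HS : is_split J eta) (HC : is_splitting J eta inC)
  (HW : le_width (2 * Delta%:R) X).
Implicit Types (e c : cell X).

Lemma JJ (e : cell X) : J (J e) = e. Proof. by case: HS. Qed.
Lemma Jbd (e e' : cell X) : bd (J e) (J e') = bd e e'. Proof. by case: HS. Qed.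
Lemma Jeta : J eta = eta. Proof. by case: HS => _ _ _ _ h; apply/eqP; rewrite h. Qed.
Lemma Jdim e : cdim (J e) = cdim e. Proof. by case: HS. Qed.
Lemma Jgr e : cgr (J e) = cgr e. Proof. by case: HS. Qed.
Lemma bd_dim (e e' : cell X) : bd e e' -> cdim e' = cdim e - 1. Proof. by case: HG => h _ _ _; apply: h. Qed.
Lemma bd_eta_eta : bd eta eta = false.
Proof. apply/negP => /bd_dim; lia. Qed.
Lemma inC_neq e : inC e -> e != eta. Proof. by case: HC => h _; apply: h. Qed.
Lemma inC_eta : inC eta = false. Proof. by apply/negP => /inC_neq; rewrite eqxx. Qed.
Lemma inCJ e : e != eta -> inC (J e) = ~~ inC e. Proof. by case: HC => _ h; apply: h. Qed.
Lemma J_neq e : e != eta -> J e != eta.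
Proof. by apply: contra => /eqP h; rewrite -[e]JJ h Jeta. Qed.
Lemma bd_J_eta e : bd (J e) eta = bd e eta. Proof. by rewrite -{1}Jeta Jbd. Qed.
Lemma bd_eta_J e : bd eta (J e) = bd eta e. Proof. by rewrite -{1}Jeta Jbd. Qed.
Lemma bd_bd_eta c (c' : cell X) : bd c eta -> bd c c' -> bd c' eta -> False.
Proof.
move=> /bd_dim h1 /bd_dim h2 /bd_dim h3; lia.
Qed.
Lemma bd_eta_bd (c' : cell X) : bd eta c' -> bd c' eta -> False.
Proof.
move=> /bd_dim h1 /bd_dim h2; lia.
Qed.

Lemma ab_coefE (x y : cell X) : y != eta -> ab_coef J inC x y = bd x y.
Proof.
move=> hy; rewrite /ab_coef /da /db.
case: ifP => Cy; first by rewrite Cy /=; case: (bd x y); case: (bd x (J y)).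
by rewrite inCJ // Cy JJ.
Qed.

Notation Xd := (dbl_cx J eta inC Delta).
Notation dC := (cell Xd).
Definition om (b : bool) : dC := inr (inl b).
Definition th : dC := inr (inr tt).

Lemma dbd_oo (x y : {c | c != eta}) : dbd J inC (inl x) (inl y) = bd (val x) (val y).
Proof.
rewrite /dbd /=; case: ifP => _ /=; rewrite ab_coefE ?Jbd //.
  by case: y. by apply: J_neq; case: y.
Qed.

Lemma dbd_oom (x : {c | c != eta}) b :
  dbd J inC (inl x) (om b) = bd (val x) eta && (b == ~~ inC (val x)).
Proof.
rewrite /dbd /=; case: ifP => _ /=; case: b => //=; rewrite ?andbT ?andbF //.
by rewrite bd_J_eta.
Qed.

Lemma dbd_oth (x : {c | c != eta}) :
  dbd J inC (inl x) th = ~~ bd (val x) eta &&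
     eta_in_db J eta inC (if inC (val x) then val x else J (val x)).
Proof. by rewrite /dbd /=; case: ifP => _ //=; rewrite bd_J_eta. Qed.

Lemma dbd_omo b (y : {c | c != eta}) : dbd J inC (om b) (inl y) = bd eta (val y).
Proof.
case: y => y hy; rewrite /dbd /om /=; case: b => /=; rewrite /zeta ?(inCJ hy) ?JJ;
  case Cy: (inC y) => /=; rewrite ?bd_eta_J //.
Qed.

Lemma dbd_omom b b' : dbd J inC (om b) (om b') = false.
Proof. by case: b. Qed.
Lemma dbd_omth b : dbd J inC (om b) th = false.
Proof. by case: b. Qed.
Lemma dbd_tho y : dbd J inC th (inl y) = false. Proof. by []. Qed.
Lemma dbd_thom b : dbd J inC th (om b) = true. Proof. by []. Qed.
Lemma dbd_thth : dbd J inC th th = false. Proof. by []. Qed.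


Lemma sum_unit (G : unit -> F) : \sum_(u : unit) G u = G tt.
Proof. by rewrite (bigD1 tt) //= big_pred0 ?addr0 // => -[]. Qed.

Lemma sum_dcell (G : dC -> F) :
  \sum_(t : dC) G t =
  \sum_(y : {c | c != eta}) G (inl y) + (G (om false) + G (om true) + G th).
Proof.
rewrite big_sumType /=; congr (_ + _).
by rewrite big_sumType /= big_bool sum_unit /= [G (om true) + _]addrC.
Qed.

Lemma sum_sig_indic c (hc : c != eta) (G : {c | c != eta} -> F) :
  \sum_y G y * (val y == c)%:R = G (exist _ c hc).
Proof.
rewrite -(sum_indic (exist _ c hc)); apply: eq_bigr => y _.
by rewrite -val_eqE.
Qed.

Lemma sum_sig_eta (G : {c | c != eta} -> F) :
  \sum_y G y * (val y == eta)%:R = 0.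
Proof. by rewrite big1 // => -[y hy] _ /=; rewrite (negbTE hy) mulr0. Qed.

Lemma DmxE (Y : geom_cx) : Dmx Y = mxf (fun s t => (bd s t)%:R).
Proof. by []. Qed.

Lemma CmE (Y : geom_cx) m : Cm Y m = mxf (fun x y => ((x == y) && cbasis m x)%:R).
Proof.
apply/matrixP => i j; rewrite !mxE (inj_eq enum_val_inj).
by case: eqP => [->|]; rewrite ?mulr1n ?mulr0n.
Qed.

Lemma DmxdE : Dmx Xd = mxf (fun s t => (dbd J inC s t)%:R).
Proof. by []. Qed.

Definition phi (t : dC) : option (cell X) :=
  match t with inl y => Some (val y) | inr (inl _) => Some eta | inr (inr _) => None end.
Definition Phi : 'M[F]_(#|dC|, #|cell X|) := mxf (fun t c => (phi t == Some c)%:R).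

Definition sS c (t : dC) : bool :=
  match t with
  | inl y => val y == c
  | inr (inl b) => ~~ b && (c == eta)
  | inr (inr _) => ~~ inC c && (c != eta) && bd c eta
  end.
Definition S : 'M[F]_(#|cell X|, #|dC|) := mxf (fun c t => (sS c t)%:R).

Lemma A1 : Dmx Xd *m Phi = Phi *m Dmx X.
Proof.
rewrite !DmxE /Phi !mulmxf; apply: mxf_eq => t c.
rewrite sum_indic_opt sum_dcell /=.
rewrite mulr0 addr0.
have [->|hc] := eqVneq c eta.
  under eq_bigr do rewrite [Some _ == _]/= .
  rewrite sum_sig_eta add0r eqxx !mulr1.
  case: t => [x|[b|[]]].
  - by rewrite !dbd_oom b2F_add /=; case: (bd _ _); case: (inC _).
  - by rewrite -[inr (inl b)]/(om b) !dbd_omom /= bd_eta_eta addr0.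
  - by rewrite /= F2_11.
under eq_bigr do rewrite [Some _ == _]/= .
rewrite (sum_sig_indic hc) -[Some eta == Some c]/(eta == c) eq_sym (negbTE hc) !mulr0 !addr0.
case: t => [x|[b|[]]].
- by rewrite dbd_oo.
- by rewrite -[inr (inl b)]/(om b) dbd_omo.
- by [].
Qed.


Lemma F2_oppr (x : F) : - x = x.
Proof.
apply/eqP; rewrite eq_sym -subr_eq0 opprK -mulr2n -mulr_natr.
by rewrite (natF 2) mulr0.
Qed.

Lemma F2_eq_add0 (x y : F) : x + y = 0 -> x = y.
Proof. by move/eqP; rewrite addr_eq0 F2_oppr => /eqP. Qed.

Lemma card_setE (T : finType) (P : pred T) : #|[set y | P y]| = #|P|.
Proof. by apply: eq_card => y; rewrite inE. Qed.

Lemma Tlemma c : c != eta ->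
  (~~ bd c eta && eta_in_db J eta inC (if inC c then c else J c))%:R =
  \sum_c' (bd c c')%:R * (~~ inC c' && (c' != eta) && bd c' eta)%:R :> F.
Proof.
move=> hc.
under eq_bigr do rewrite b2F_mul.
case hce: (bd c eta) => /=.
  rewrite big1 // => c' _.
  case h1: (bd c c') => //=; case h2: (bd c' eta); rewrite ?andbF //.
  by case: (bd_bd_eta hce h1 h2).
rewrite /eta_in_db card_setE -sum_b2F /db.
case Cc: (inC c).
  rewrite (reindex_inj (can_inj JJ)) /=.
  apply: eq_bigr => y _; rewrite JJ bd_J_eta.
  have [->|hy] := eqVneq y eta; first by rewrite Jeta inC_eta !andbF.
  by rewrite inCJ // andbT; case: (bd c y); case: (inC y).
apply: F2_eq_add0; rewrite -big_split /=.
have Hsq := (match HG with And4 _ h _ _ => h end) c eta.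
transitivity (\sum_x (bd c x && bd x eta)%:R : F); last first.
  by rewrite sum_b2F -card_setE (negbTE Hsq).
apply: eq_bigr => y _; rewrite b2F_add Jbd; congr (_%:R).
have [->|hy] := eqVneq y eta; first by rewrite bd_eta_eta !andbF.
by case: (inC y); case: (bd c y); case: (bd y eta).
Qed.


Lemma sS_om c b : sS c (om b) = ~~ b && (c == eta). Proof. by []. Qed.
Lemma sS_th c : sS c th = ~~ inC c && (c != eta) && bd c eta. Proof. by []. Qed.

Local Opaque dbd.
Lemma A2 : Dmx X *m S = S *m Dmx Xd.
Proof.
rewrite DmxdE !DmxE /S !mulmxf; apply: mxf_eq => c t.
rewrite [RHS]sum_dcell.
under [Z in _ = Z + _]eq_bigr do rewrite mulrC.
rewrite -/(sS c (om false)) -/(sS c (om true)) -/(sS c th).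
rewrite [sS c (om false)]/= [sS c (om true)]/= [sS c th]/=.
under [Z in _ = Z + _]eq_bigr do rewrite [sS _ _]/=.
have [->|hc] := eqVneq c eta.
  rewrite sum_sig_eta add0r inC_eta /= !mul0r !mul1r !addr0.
  case: t => [y|[b|[]]].
  - rewrite dbd_omo -(sum_indicl (val y) (fun c' => (bd eta c')%:R)).
    by apply: eq_bigr => c' _; rewrite /= mulrC.
  - rewrite -[inr (inl b)]/(om b) dbd_omom.
    rewrite big1 // => c' _ /=; case: eqP => [->|]; rewrite ?bd_eta_eta ?andbF ?andbT ?mulr0 ?mul0r //.
  - rewrite -[inr (inr tt)]/th dbd_omth.
    rewrite big1 // => c' _ /=; case h1: (bd eta c') => //=; rewrite ?mul0r //.
    case h2: (bd c' eta); rewrite ?andbF ?mulr0 //; by case: (bd_eta_bd h1 h2).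
rewrite (sum_sig_indic hc) andbT !mul0r !add0r.
case: t => [y|[b|[]]].
- rewrite dbd_oo dbd_tho mulr0 addr0 -(sum_indicl (val y) (fun c' => (bd c c')%:R)).
  by apply: eq_bigr => c' _; rewrite /= mulrC.
- rewrite -[inr (inl b)]/(om b) dbd_oom /= mulr1.
  transitivity (\sum_y (bd c y)%:R * (~~ b)%:R * (y == eta)%:R : F).
    by apply: eq_bigr => y _; rewrite -mulrA !b2F_mul.
  rewrite (sum_indic eta (fun y => (bd c y)%:R * (~~ b)%:R)) b2F_mul b2F_add.
  by case: b; case: (inC c); case: (bd c eta).
- rewrite -[inr (inr tt)]/th dbd_oth dbd_thth mulr0 addr0 /= (Tlemma hc).
  by apply: eq_bigr => y _.
Qed.


Notation g := (maslov eta).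
Notation am m := ([exists k : 'I_Delta, m == g - 2 * (nat_of_ord k)%:R]).

Lemma mas_old (x : {c | c != eta}) : @maslov Xd (inl x) = maslov (val x). Proof. by []. Qed.
Lemma mas_om b : @maslov Xd (om b) = g. Proof. by []. Qed.
Lemma mas_th : @maslov Xd th = g - 2 * Delta%:R + 1.
Proof. rewrite /maslov /= intrD; ring. Qed.

Lemma coset c c' : exists z : int, cgr c - cgr c' = 2 * z%:~R.
Proof.
case: HG => _ _ [q0 h] _; case: (h c) => z1 ->; case: (h c') => z2 ->.
exists (z1 - z2); rewrite intrB; ring.
Qed.

Lemma dim_bd_eta c : bd c eta -> (cdim c)%:~R = (cdim eta)%:~R + 1 :> rat.
Proof. move/bd_dim => ->; rewrite intrB; ring. Qed.

Lemma natE (x : rat) : (x \is a Num.nat) = (x \is a Num.int) && (0 <= x).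
Proof. exact: natrEint. Qed.

Lemma cb_th_of c m : bd c eta -> cbasis m c -> @cbasis Xd m th.
Proof.
move=> hb; rewrite /cbasis mas_th => hc.
have [z hz] := coset eta c.
have hw := HW hb.
have -> : (g - 2 * Delta%:R + 1 - m) / 2 = (maslov c - m) / 2 + (z%:~R - Delta%:R).
  rewrite /maslov (dim_bd_eta hb).
  have -> : z%:~R = (cgr eta - cgr c) / 2 by rewrite hz; field.
  by field.
rewrite rpredD // natE; apply/andP; split.
  by rewrite rpredB ?intr_int ?rpred_nat.
move: hw; rewrite hz; lra.
Qed.


Lemma amP m : reflect (exists2 k : nat, (k < Delta)%N & m = g - 2 * k%:R) (am m).
Proof.
apply: (iffP existsP) => [[k /eqP ->]|[k hk ->]]; first by exists k.
by exists (Ordinal hk).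
Qed.

Lemma L2a m : am m -> ~~ @cbasis Xd (m + 1) th.
Proof.
case/amP => k hk ->; rewrite /cbasis mas_th.
have -> : (g - 2 * Delta%:R + 1 - (g - 2 * k%:R + 1)) / 2 = k%:R - Delta%:R by field.
apply/negP => /natr_ge0; rewrite subr_ge0 ler_nat; lia.
Qed.

Lemma L2b m c : am m -> bd c eta -> ~~ cbasis (m + 1) c.
Proof.
case/amP => k hk -> hb; rewrite /cbasis.
have hw := HW hb.
apply/negP => /natr_ge0; rewrite /maslov (dim_bd_eta hb).
have : (k%:R : rat) < Delta%:R by rewrite ltr_nat.
move: hw; rewrite /maslov; lra.
Qed.

Lemma L1 m b : @cbasis Xd m (om b) -> ~~ am m -> @cbasis Xd (m + 1) th.
Proof.
rewrite /cbasis mas_om mas_th => /natrP[n hn] ham.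
have hm : m = g - 2 * n%:R by rewrite -hn; field.
have hn' : (Delta <= n)%N.
  rewrite leqNgt; apply/negP => hlt; move/negP: ham; apply; apply/amP; by exists n.
have -> : (g - 2 * Delta%:R + 1 - (m + 1)) / 2 = (n - Delta)%N%:R.
  by rewrite natrB // hm; field.
exact: rpred_nat.
Qed.

Lemma L3 m b : am m -> @cbasis Xd m (om b).
Proof.
case/amP => k hk ->; rewrite /cbasis mas_om.
have -> : (g - (g - 2 * k%:R)) / 2 = k%:R by field.
exact: rpred_nat.
Qed.

Lemma L4 m b : am (m - 2) -> ~~ am m -> ~~ @cbasis Xd m (om b).
Proof.
case/amP => k hk hm ham; apply/negP; rewrite /cbasis mas_om => /natrP[n hn].
move/negP: ham; apply; apply/amP; exists n; last by rewrite -hn; field.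
have : (k%:R : rat) = n.+1%:R.
  rewrite -addn1 natrD -hn; move: hm; lra.
move/eqP; rewrite eqr_nat => /eqP; lia.
Qed.


Lemma A3 m : Cm Xd m *m Phi = Phi *m Cm X m.
Proof.
rewrite !CmE /Phi !mulmxf; apply: mxf_eq => t c.
rewrite sum_indic_opt.
transitivity (\sum_t' (t == t')%:R * ((@cbasis Xd m t)%:R * (phi t' == Some c)%:R) : F).
  by apply: eq_bigr => t' _; rewrite mulrA !b2F_mul.
rewrite (sum_indicl t (fun t' => (@cbasis Xd m t)%:R * (phi t' == Some c)%:R)).
case: t => [x|[b|[]]] /=; rewrite ?mulr0 //; by rewrite b2F_mul andbC.
Qed.

Lemma A4 m : Cm X m *m S *m Cm Xd m = Cm X m *m S.
Proof.
rewrite !CmE /S !mulmxf; apply: mxf_eq => c t.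
under eq_bigr do rewrite sum_diag_l.
rewrite sum_diag_r sum_diag_l -mulrA b2F_mul.
rewrite !b2F_mul; congr (_%:R).
case: t => [y|[b|[]]].
- rewrite -[@cbasis Xd m (inl y)]/(cbasis m (val y)) /=.
  by case: eqP => [<-|]; rewrite ?andbF // andbT andbb.
- rewrite -[@cbasis Xd m (inr (inl b))]/(cbasis m eta) /=.
  by case: eqP => [->|]; rewrite ?andbF //; case: (cbasis m eta); case: b.
- rewrite -[sS c (inr (inr tt))]/(sS c th) sS_th.
  case hb: (bd c eta); rewrite ?andbF //.
  case hc: (cbasis m c) => //=.
  by rewrite (cb_th_of hb hc) !andbT.
Qed.


Lemma A5 : S *m Phi = 1%:M.
Proof.
rewrite /S /Phi mulmxf mxf1; apply: mxf_eq => c c2.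
rewrite sum_dcell /= mul0r mulr0 !addr0.
under eq_bigr do rewrite mulrC.
have [->|hc] := eqVneq c eta.
  by rewrite sum_sig_eta add0r mul1r.
rewrite (sum_sig_indic hc) mul0r addr0.
by [].
Qed.

Definition tau (a : nat) : 'M[F]_(#|dC|, a) := \matrix_(i, j) (enum_val i == om true)%:R.

Lemma A6 a : S *m tau a = 0.
Proof.
apply/matrixP => i j; rewrite /S mulmxfE_l mxE sum_dcell big1 ?add0r.
  by rewrite !mxE !enum_rankK /= !mulr0 mul0r !addr0.
by move=> y _; rewrite mxE enum_rankK mulr0.
Qed.

Definition E : 'M[F]_(1, #|dC|) :=
  \matrix_(i, j) ((enum_val j == om false)%:R + (enum_val j == om true)%:R).
Definition eth : 'M[F]_(1, #|dC|) := \matrix_(i, j) (enum_val j == th)%:R.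
Definition bth (t : dC) : bool :=
  match t with inl y => ~~ inC (val y) && bd (val y) eta | inr (inl _) => false
  | inr (inr _) => true end.
Definition Bth : 'M[F]_(#|dC|, 1) := \matrix_(i, j) (bth (enum_val i))%:R.

Lemma A7 : 1%:M - Phi *m S = tau 1 *m E + Bth *m eth.
Proof.
rewrite /Phi /S mulmxf; apply/matrixP => i j.
rewrite !mxE !big_ord1 !mxE sum_indic_opt -[i == j](inj_eq enum_val_inj).
move: (enum_val i) (enum_val j) => t t'.
rewrite F2_oppr.
case: t => [x|[[]|[]]]; case: t' => [y|[[]|[]]]; rewrite /= ?mulr0 ?mul0r ?addr0 ?add0r ?mul1r ?mulr1 //.
all: rewrite ?eqxx ?andbF ?F2_11 //.
all: try by case: x => x' /= /negbTE ->.
all: try by case: y => y' /= /negbTE ->.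
- have -> : (inl x == inl y :> dC) = (x == y) by apply/eqP/eqP => [[]|->].
  by rewrite b2F_add -val_eqE eq_sym addbb.
- by case: x => x' /= ->; rewrite andbT.
Qed.

Lemma om_eq b b' : (om b == om b') = (b == b'). Proof. by case: b; case: b'. Qed.
Lemma th_om b : (th == om b) = false. Proof. by []. Qed.
Lemma om_th b : (om b == th) = false. Proof. by []. Qed.
Lemma old_om x b : (inl x == om b) = false. Proof. by []. Qed.
Lemma old_th x : (inl x == th) = false. Proof. by []. Qed.
Lemma dbd_om_sym t : dbd J inC (om false) t = dbd J inC (om true) t.
Proof.
case: t => [y|[b|[]]]; first by rewrite !dbd_omo.
  by rewrite -[inr (inl b)]/(om b) !dbd_omom.
by rewrite -[inr (inr tt)]/th !dbd_omth.
Qed.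
Lemma F2_xx (x : F) : x + x = 0.
Proof. by rewrite -{1}[x]F2_oppr addNr. Qed.

Lemma A8a : E *m Dmx Xd = 0.
Proof.
apply/matrixP => i j; rewrite DmxdE mulmxfE_r mxE sum_dcell big1 ?add0r.
  rewrite !mxE !enum_rankK !om_eq !th_om !eqxx -[(false == true)]/false -[(true == false)]/false.
  rewrite !mulr0n !mulr1n !addr0 !add0r !mul0r !addr0 !mul1r.
  by rewrite dbd_om_sym F2_xx.
by move=> y _; rewrite !mxE enum_rankK !old_om !mulr0n addr0 mul0r.
Qed.

Lemma A8b : eth *m Dmx Xd = E.
Proof.
apply/matrixP => i j; rewrite DmxdE mulmxfE_r mxE sum_dcell big1 ?add0r.
  rewrite !mxE !enum_rankK !om_th eqxx !mulr0n !mul0r !add0r mulr1n mul1r.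
  case: (enum_val j) => [y|[b|[]]].
  - by rewrite dbd_tho !old_om mulr0n addr0.
  - by rewrite -[inr (inl b)]/(om b) dbd_thom !om_eq; case: b; rewrite /= ?mulr0n ?mulr1n ?addr0 ?add0r.
  - by rewrite -[inr (inr tt)]/th dbd_thth !th_om mulr0n addr0.
by move=> y _; rewrite !mxE enum_rankK old_th mulr0n mul0r.
Qed.




Lemma A11 m a : am m -> Cm Xd (m + 1) *m Dmx Xd *m tau a = 0.
Proof.
move=> ham; rewrite CmE DmxdE mulmxf; apply/matrixP => i j.
rewrite mulmxfE_l mxE.
under eq_bigr do rewrite mxE enum_rankK.
rewrite (sum_indic (om true)) sum_diag_l b2F_mul.
case: (enum_val i) => [x|[b|[]]].
- rewrite dbd_oom /=.
  case hb: (bd (val x) eta); last by rewrite /= ?andbF ?mulr0n.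
  by rewrite -[@cbasis Xd (m + 1) (inl x)]/(@cbasis X (m + 1) (val x)) (negbTE (L2b ham hb)) /= mulr0n.
- by rewrite -[inr (inl b)]/(om b) dbd_omom andbF /= mulr0n.
- by rewrite -[inr (inr tt)]/th (negbTE (L2a ham)) /= mulr0n.
Qed.


Lemma D1 m : @cbasis Xd m (om false) -> E *m Cm Xd m = E.
Proof.
move=> hc; rewrite CmE; apply/matrixP => i j.
rewrite mulmxfE_r (sum_diag_r (fun t => @cbasis Xd m t) (enum_val j) (fun y => E i (enum_rank y))).
rewrite [in RHS]mxE -[in RHS](enum_valK j) !mxE enum_rankK.
case: (enum_val j) => [y|[b|[]]].
- by rewrite !old_om mulr0n add0r mul0r.
- by rewrite -[inr (inl b)]/(om b) -[@cbasis Xd m (om b)]/(@cbasis Xd m (om false)) hc mulr1.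
- by rewrite -[inr (inr tt)]/th !th_om mulr0n add0r mul0r.
Qed.

Lemma D2 m : @cbasis Xd m th -> eth *m Cm Xd m = eth.
Proof.
move=> hc; rewrite CmE; apply/matrixP => i j.
rewrite mulmxfE_r (sum_diag_r (fun t => @cbasis Xd m t) (enum_val j) (fun y => eth i (enum_rank y))).
rewrite [in RHS]mxE -[in RHS](enum_valK j) !mxE enum_rankK.
case: (enum_val j) => [y|[b|[]]].
- by rewrite !old_th mulr0n mul0r.
- by rewrite -[inr (inl b)]/(om b) om_th mulr0n mul0r.
- by rewrite -[inr (inr tt)]/th hc mulr1.
Qed.

Lemma D3 m a : ~~ @cbasis Xd m (om true) -> Cm Xd m *m tau a = 0.
Proof.
move=> hc; rewrite CmE; apply/matrixP => i j.
rewrite mulmxfE_l mxE.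
under eq_bigr do rewrite mxE enum_rankK.
rewrite (sum_indic (om true)).
by case: eqP => [->|]; rewrite ?(negbTE hc) /= ?andbF ?mulr0n.
Qed.

Lemma CmCm (Y : geom_cx) m : Cm Y m *m Cm Y m = Cm Y m.
Proof.
rewrite CmE mulmxf; apply: mxf_eq => x z.
by rewrite sum_diag_l b2F_mul andbC -andbA andbb.
Qed.

Lemma sub_Cm (Y : geom_cx) n m (v : 'M[F]_(n, #|cell Y|)) :
  (v <= Cm Y m)%MS -> v *m Cm Y m = v.
Proof. by case/submxP => W ->; rewrite -mulmxA CmCm. Qed.


Lemma EPhi0 : E *m Phi = 0.
Proof.
apply/matrixP => i c; rewrite /Phi mulmxfE_r mxE sum_dcell big1 ?add0r.
  rewrite !mxE !enum_rankK !om_eq !th_om !eqxx -[(false == true)]/false -[(true == false)]/false.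
  by rewrite !mulr0n !mulr1n !addr0 !add0r !mul0r !addr0 !mul1r F2_xx.
by move=> y _; rewrite !mxE enum_rankK !old_om !mulr0n addr0 mul0r.
Qed.

Lemma Etau a : E *m tau a = const_mx 1.
Proof.
apply/matrixP => i j; rewrite !mxE.
rewrite sum_ord_rank sum_dcell big1 ?add0r.
  rewrite !mxE !enum_rankK !om_eq !th_om !eqxx -[(false == true)]/false -[(true == false)]/false.
  by rewrite /= ?mulr0n ?mulr1n ?mulr0 ?mul0r ?addr0 ?add0r ?mulr1.
by move=> y _; rewrite !mxE enum_rankK !old_om !mulr0n addr0 mul0r.
Qed.

Lemma tau_col n (v : 'M[F]_(n, #|dC|)) a (i : 'I_n) (j : 'I_a) :
  (v *m tau a) i j = (v *m tau 1) i 0.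
Proof. by rewrite !mxE; apply: eq_bigr => k _; rewrite !mxE. Qed.


Lemma main_iso : gmod_iso (HF Xd) (gsum (HF X) (Tmod g Delta)).
Proof.
exists (fun m => row_mx Phi (tau (amb (Tmod g Delta) m))) => m /=.
set Z := (Cm Xd m :&: kermx (Dmx Xd))%MS.
have ZP : (Z <= Cm Xd m)%MS by apply: capmxSl.
have ZK : Z *m Dmx Xd = 0 by apply/sub_kermxP; apply: capmxSr.
have subZ n (v : 'M[F]_(n, #|dC|)) : (v <= Cm Xd m)%MS -> v *m Dmx Xd = 0 -> (v <= Z)%MS.
  by move=> h1 h2; rewrite sub_capmx h1; apply/sub_kermxP.
split.
-
  rewrite mul_mx_row; apply: row_block_sub; last exact: submx1.
  rewrite sub_capmx; apply/andP; split.
    by rewrite -(sub_Cm ZP) -mulmxA A3 mulmxA submxMl.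
  by apply/sub_kermxP; rewrite -mulmxA -A1 mulmxA ZK mul0mx.
-
  rewrite mul_mx_row; apply: row_block_sub.
    by rewrite -mulmxA A1 mulmxA A3 -mulmxA submxMl.
  have [ham|ham] := boolP (am m).
    by rewrite (A11 _ ham) sub0mx.
  by apply: thin_sub0.
-
  move=> v hv; rewrite mul_mx_row => /row_block_sub0 [/submxP [w hw] hvt].
  have vP : v *m Cm Xd m = v by apply: sub_Cm; apply: submx_trans hv ZP.
  have vK : v *m Dmx Xd = 0 by apply/sub_kermxP; apply: submx_trans hv (capmxSr _ _).
  set u := w *m Cm X (m + 1) *m S.
  have uDD : u *m Dmx Xd = v *m Phi *m S.
    by rewrite /u -!mulmxA -A2 !mulmxA hw mulmxA.
  have uB : (u *m Dmx Xd <= Cm Xd (m + 1) *m Dmx Xd)%MS.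
    by rewrite /u -(mulmxA w) -A4 !mulmxA -mulmxA submxMl.
  have dec : v = (v *m tau 1) *m E + (v *m Bth) *m eth + u *m Dmx Xd.
    rewrite uDD -!mulmxA -mulmxDr -A7 mulmxBr mulmx1 mulmxA subrK //.
  have vPSD : v *m Phi *m S *m Dmx Xd = 0.
    by rewrite -mulmxA -A2 mulmxA -(mulmxA v) -A1 mulmxA vK !mul0mx.
  have vB0 : v *m Bth = 0.
    have h0 : (v *m Bth) *m E = 0.
      move: vK; rewrite {1}dec !mulmxDl -(mulmxA (v *m tau 1)) A8a mulmx0 add0r -(mulmxA (v *m Bth)) A8b uDD vPSD addr0.
      by [].
    apply/matrixP => i j; rewrite (ord1 i) (ord1 j).
    move/matrixP: h0 => /(_ 0 (enum_rank (om false))).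
    rewrite !mxE big_ord1 !mxE enum_rankK !om_eq !eqxx -[(false == true)]/false.
    by rewrite mulr0n mulr1n addr0 mulr1.
  have dec2 : v = (v *m tau 1) *m E + u *m Dmx Xd.
    by rewrite {1}dec vB0 mul0mx addr0.
  rewrite dec2; apply: addmx_sub => //.
  have [hcb|hcb] := boolP (@cbasis Xd m (om true)); last first.
    by rewrite -vP -(mulmxA v) (D3 _ hcb) mulmx0 mul0mx sub0mx.
  have [ham|ham] := boolP (am m).
    suff -> : v *m tau 1 = 0 by rewrite mul0mx sub0mx.
    apply/matrixP => i j; rewrite (ord1 i) (ord1 j).
    have j' : 'I_(am m) by rewrite ham; exact: ord0.
    by rewrite -(tau_col v 0 j') hvt !mxE.
  have hth := L1 hcb ham.
  by rewrite -A8b -(D2 hth) !mulmxA -mulmxA submxMl.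
-
  apply: submx_trans (addsmxSl _ _).
  rewrite /block_mx col_mx_sub; apply/andP; split.
    set Zx := (Cm X m :&: kermx (Dmx X))%MS.
    have -> : row_mx Zx 0 = (Zx *m S) *m row_mx Phi (tau (am m)).
      by rewrite mul_mx_row -!mulmxA A5 A6 mulmx1 mulmx0.
    apply: submxMr; apply: subZ.
      by rewrite -(sub_Cm (capmxSl _ _ : (Zx <= Cm X m)%MS)) -(mulmxA Zx) -A4 !mulmxA submxMl.
    have ZxK : Zx *m Dmx X = 0 by apply/sub_kermxP; apply: capmxSr.
    by rewrite -mulmxA -A2 mulmxA ZxK mul0mx.
  have [ham|ham] := boolP (am m); last by apply: flat_sub.
  have -> : row_mx 0 1%:M = (const_mx 1 : 'M[F]_(true, 1)) *m (E *m row_mx Phi (tau true)).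
    by rewrite mul_mx_row EPhi0 Etau mul_mx_row mulmx0 -one_const.
  apply: submx_trans (submxMl _ _) _; apply: submxMr; apply: subZ.
    by rewrite -(D1 (L3 false ham)) submxMl.
  exact: A8a.
-
  move=> v hv.
  have vP : v *m Cm Xd m = v by apply: sub_Cm; apply: submx_trans hv ZP.
  suff -> : v *m 1%:M *m row_mx Phi (tau (am (m - 2))) -
      v *m row_mx Phi (tau (am m)) *m block_mx 1%:M 0 0 (const_mx 1) = 0 by apply: sub0mx.
  rewrite mulmx1 !mul_mx_row mul_row_block !mulmx1 !mulmx0 addr0 add0r.
  rewrite opp_row_mx add_row_mx subrr.
  suff -> : v *m tau (am (m - 2)) = v *m tau (am m) *m const_mx 1.
    by rewrite subrr row_mx0.
  apply/matrixP => i j; rewrite tau_col [RHS]mxE.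
  have hm2 : am (m - 2).
    have := ltn_ord j; move: (nat_of_ord j) => k; by case: (am (m - 2)).
  under eq_bigr => k _ do rewrite (tau_col v i k) [const_mx 1 k j]mxE mulr1.
  rewrite sumr_const card_ord.
  have [ham|ham] := boolP (am m); first by rewrite /= mulr1n.
  rewrite /= mulr0n.
  have hcb := L4 true hm2 ham.
  by rewrite -vP -(mulmxA v) (D3 _ hcb) mulmx0 mxE.
Qed.

End Main.

Unset Implicit Arguments.

Theorem lemma5p1 (X : geom_cx) (J : cell X -> cell X) (eta : cell X)
    (inC : pred (cell X)) (Delta : nat) :
  is_geom X -> is_split J eta -> is_splitting J eta inC ->
  le_width (2 * Delta%:R) X ->
  gmod_iso (HF (dbl_cx J eta inC Delta))
           (gsum (HF X) (Tmod (maslov eta) Delta)).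
Proof.
move=> HG HS HC HW; apply: main_iso => //.
Qed.
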